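(* Let $\varphi\in\mathcal{A}$ be w.h.i.s. Then the Casimirs of the Poisson algebra $(\mathcal{A}_\varphi,\{\cdot,\cdot\}_{\mathcal{A}_\varphi})$ are exactly the constants: $H^0(\mathcal{A}_\varphi)=\mathrm{Cas}(\mathcal{A}_\varphi)=\mathbf{F}$. Equivalently, if $f\in\mathcal{A}$ satisfies $\vec\nabla f\times\vec\nabla\varphi\in\varphi\mathcal{A}^3$, then $f\in\mathbf{F}+\varphi\mathcal{A}$.
   Context: $\mathbf{F}$ is a field of characteristic zero and $\mathcal{A}=\mathbf{F}[x,y,z]$. $\vec\nabla f=(\partial f/\partial x,\partial f/\partial y,\partial f/\partial z)$ and $\times$ is the cross product on $\mathcal{A}^3$. Fix positive integers $\varpi_1,\varpi_2,\varpi_3$ without common divisor $>1$ (weights of $x,y,z$). A nonzero polynomial is weight homogeneous of degree $d$ if it is an $\mathbf{F}$-linear combination of monomials $x^ay^bz^c$ with $a\varpi_1+b\varpi_2+c\varpi_3=d$. $\varphi\in\mathcal{A}$ is w.h.i.s. if it is weight homogeneous and $\mathcal{A}_{sing}:=\mathcal{A}/\langle\partial_x\varphi,\partial_y\varphi,\partial_z\varphi\rangle$ is a nonzero finite-dimensional $\mathbf{F}$-vector space. The Poisson bracket $\{\cdot,\cdot\}_\varphi$ on $\mathcal{A}$ is determined by $\{x,y\}_\varphi=\partial_z\varphi$, $\{y,z\}_\varphi=\partial_x\varphi$, $\{z,x\}_\varphi=\partial_y\varphi$; it induces a Poisson bracket $\{\cdot,\cdot\}_{\mathcal{A}_\varphi}$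 on $\mathcal{A}_\varphi:=\mathcal{A}/\langle\varphi\rangle$ via $\{\pi(f),\pi(g)\}_{\mathcal{A}_\varphi}=\pi(\{f,g\}_\varphi)$, $\pi:\mathcal{A}\to\mathcal{A}_\varphi$ the projection. A Casimir is an element $c$ with $\{c,\cdot\}_{\mathcal{A}_\varphi}=0$. *)

(* Defs.v *)
From HB Require Import structures.
From mathcomp Require Import all_boot all_order all_algebra.
From mathcomp Require Import multinomials.mpoly.
Set Implicit Arguments. Unset Strict Implicit. Unset Printing Implicit Defensive.
Import GRing.Theory.
Local Open Scope ring_scope.

(* A = F[x,y,z] is {mpoly F[3]}; x = 'X_0, y = 'X_1, z = 'X_2. *)
Notation poly3 F := {mpoly F[3]}.

Definition i0 : 'I_3 := @Ordinal 3 0 isT.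
Definition i1 : 'I_3 := @Ordinal 3 1 isT.
Definition i2 : 'I_3 := @Ordinal 3 2 isT.

Section Defs.
Variable F : fieldType.

Definition wdeg (w : 'I_3 -> nat) (m : 'X_{1..3}) : nat :=
  (\sum_(i < 3) w i * m i)%N.

Definition weight_homogeneous (w : 'I_3 -> nat) (d : nat) (p : poly3 F) : Prop :=
  p != 0 /\ forall m, m \in msupp p -> wdeg w m = d.

Definition in_jacobian_ideal (phi f : poly3 F) : Prop :=
  exists g : 'I_3 -> poly3 F, f = \sum_(i < 3) g i * phi^`M(i).

(* A_sing = A / <dx phi, dy phi, dz phi> is nonzero and finite-dimensional:
   the ideal is proper, and the quotient is spanned by the images of
   finitely many polynomials. *)
Definition Asing_nonzero (phi : poly3 F) : Prop := ~ in_jacobian_ideal phi 1.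
Definition Asing_findim (phi : poly3 F) : Prop :=
  exists s : seq (poly3 F), forall f : poly3 F,
    exists c : nat -> F,
      in_jacobian_ideal phi (f - \sum_(k < size s) c k *: s`_k).

Definition whis (w : 'I_3 -> nat) (phi : poly3 F) : Prop :=
  (exists d, weight_homogeneous w d phi) /\ Asing_nonzero phi /\ Asing_findim phi.

Definition grad (f : poly3 F) : 'I_3 -> poly3 F := fun i => f^`M(i).
Definition cross (u v : 'I_3 -> poly3 F) : 'I_3 -> poly3 F :=
  fun i => if i == i0 then u i1 * v i2 - u i2 * v i1
           else if i == i1 then u i2 * v i0 - u i0 * v i2
           else u i0 * v i1 - u i1 * v i0.

(* {f,g}_phi = grad phi . (grad f x grad g); it satisfies
   {x,y} = dz phi, {y,z} = dx phi, {z,x} = dy phi. *)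
Definition pbracket (phi f g : poly3 F) : poly3 F :=
  \sum_(i < 3) grad phi i * cross (grad f) (grad g) i.

Definition in_phiA (phi f : poly3 F) : Prop := exists h : poly3 F, f = phi * h.

(* pi(f) is a Casimir of A_phi = A/<phi> with the induced bracket:
   {pi f, pi g} = pi {f,g}_phi = 0 for all g. *)
Definition casimir_rep (phi f : poly3 F) : Prop :=
  forall g : poly3 F, in_phiA phi (pbracket phi f g).

(* pi(f) lies in F (image of the constants): f in F + phi A *)
Definition const_mod_phi (phi f : poly3 F) : Prop :=
  exists (c : F) (h : poly3 F), f = c%:MP + phi * h.
End Defs.

(* Main.v *)
Require Import Defs.
From HB Require Import structures.
From mathcomp Require Import all_boot all_order all_algebra.
From mathcomp Require Import multinomials.mpoly.
From mathcomp Require Import ring zify.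
From Stdlib Require Import Classical ClassicalEpsilon.
Set Implicit Arguments. Unset Strict Implicit. Unset Printing Implicit Defensive.
Import GRing.Theory.
Local Open Scope ring_scope.

Lemma ord3_cases (i : 'I_3) : i = i0 \/ i = i1 \/ i = i2.
Proof.
case: i => [[|[|[|k]]] H].
- by left; apply: val_inj.
- by right; left; apply: val_inj.
- by right; right; apply: val_inj.
- by [].
Qed.

Lemma sum3 (R : nmodType) (G : 'I_3 -> R) : \sum_(i < 3) G i = G i0 + G i1 + G i2.
Proof.
rewrite !big_ord_recr big_ord0 /= add0r.
by congr (G _ + G _ + G _); apply: val_inj.
Qed.

Lemma sum3n (G : 'I_3 -> nat) : (\sum_(i < 3) G i = G i0 + G i1 + G i2)%N.
Proof.
rewrite !big_ord_recr big_ord0 /= add0n.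
by congr (G _ + G _ + G _); apply: val_inj.
Qed.

Section S.
Variable F : fieldType.
Implicit Types p q : poly3 F.

Lemma coefMX0 p (m k : 'X_{1..3}) : ~~ (m <= k)%MM -> (p * 'X_[m])@_k = 0.
Proof.
move=> H; apply: memN_msupp_eq0; apply/negP => Hk.
rewrite (perm_mem (msuppMX p m)) in Hk.
case/mapP: Hk => m' _ Ek; move: H; rewrite Ek.
by rewrite lem_addr.
Qed.

Lemma Xderiv_coef (i : 'I_3) q (m : 'X_{1..3}) :
  ('X_i * q^`M(i))@_m = (m i)%:R * q@_m.
Proof.
rewrite mulrC.
have [Hm|Hm] := boolP (U_(i) <= m)%MM.
- have Em : m = (U_(i) + (m - U_(i)))%MM by rewrite addmC submK.
  rewrite {1}Em mcoeffMX mcoeff_deriv submK // mnmBE mnm1E eqxx.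
  move: Hm; rewrite lep1mP => Hm.
  by rewrite subn1 prednK ?lt0n // mulr_natl.
- rewrite coefMX0 //.
  move: Hm; rewrite lep1mP negbK => /eqP ->.
  by rewrite mul0r.
Qed.


Variable w : 'I_3 -> nat.
Definition Dop p : poly3 F :=
  \sum_(i < 3) ((w i)%:R)%:MP * ('X_i * p^`M(i)).

Lemma D_coef p m : (Dop p)@_m = (wdeg w m)%:R * p@_m.
Proof.
rewrite /Dop sum3 !mcoeffD !mcoeffCM !Xderiv_coef /wdeg sum3n !natrD !natrM.
ring.
Qed.

Lemma D_mul p q : Dop (p * q) = Dop p * q + p * Dop q.
Proof. rewrite /Dop !sum3 !mderivM; ring. Qed.

Lemma D_add p q : Dop (p + q) = Dop p + Dop q.
Proof. by apply/mpolyP => m; rewrite mcoeffD !D_coef mcoeffD mulrDr. Qed.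

Lemma D_sub p q : Dop (p - q) = Dop p - Dop q.
Proof. by apply/mpolyP => m; rewrite mcoeffB !D_coef mcoeffB mulrBr. Qed.

Lemma D_scale c p : Dop (c%:MP * p) = c%:MP * Dop p.
Proof. by apply/mpolyP => m; rewrite mcoeffCM !D_coef mcoeffCM mulrCA. Qed.

Lemma D_hom p e : (forall m, m \in msupp p -> wdeg w m = e) ->
  Dop p = (e%:R)%:MP * p.
Proof.
move=> H; apply/mpolyP => m; rewrite D_coef mcoeffCM.
case: (boolP (m \in msupp p)) => Hm; first by rewrite H.
by rewrite memN_msupp_eq0 // !mulr0.
Qed.


Lemma D0 : Dop 0 = 0.
Proof. by apply/mpolyP => m; rewrite D_coef !mcoeff0 mulr0. Qed.

Lemma D_sum M (a : nat -> poly3 F) :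
  Dop (\sum_(n < M) a n) = \sum_(n < M) Dop (a n).
Proof. exact: (big_morph _ D_add D0). Qed.

Variable phi : poly3 F.
Local Notation inJ := (in_jacobian_ideal phi).

Lemma inJ0 : inJ 0.
Proof. by exists (fun _ => 0); rewrite big1 // => i _; rewrite mul0r. Qed.

Lemma inJ_add p q : inJ p -> inJ q -> inJ (p + q).
Proof.
move=> [g1 ->] [g2 ->]; exists (fun i => g1 i + g2 i).
by rewrite -big_split /=; apply: eq_bigr => i _; rewrite mulrDl.
Qed.

Lemma inJ_mul a p : inJ p -> inJ (a * p).
Proof.
move=> [g ->]; exists (fun i => a * g i).
by rewrite mulr_sumr; apply: eq_bigr => i _; rewrite mulrA.
Qed.

Lemma inJ_opp p : inJ p -> inJ (- p).
Proof. by move=> H; rewrite -mulN1r; apply: inJ_mul. Qed.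

Lemma inJ_sub p q : inJ p -> inJ q -> inJ (p - q).
Proof. by move=> Hp Hq; apply: inJ_add => //; apply: inJ_opp. Qed.

Lemma inJ_sum M (a : nat -> poly3 F) :
  (forall n, (n < M)%N -> inJ (a n)) -> inJ (\sum_(n < M) a n).
Proof.
elim: M a => [|M IH] a H; first by rewrite big_ord0; apply: inJ0.
rewrite big_ord_recr /=; apply: inJ_add; last exact: H.
by apply: (IH a) => n Hn; apply: H; apply: ltnW.
Qed.

Hypothesis DJ : forall j, inJ j -> inJ (Dop j).

Lemma sep M : forall (a : nat -> poly3 F) (lam : nat -> F),
  (forall n, Dop (a n) = (lam n)%:MP * a n) ->
  (forall n n', (n < M)%N -> (n' < M)%N -> lam n = lam n' -> n = n') ->
  inJ (\sum_(n < M) a n) -> forall n, (n < M)%N -> inJ (a n).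
Proof.
elim: M => [|M IH] a lam Ha Hinj HS n Hn; first by [].
move: HS; rewrite big_ord_recr /= => HS.
set b := fun n => (lam n - lam M)%:MP * a n.
have Hb : inJ (\sum_(n < M) b n).
  have -> : \sum_(n < M) b n =
      Dop (\sum_(n < M) a n + a M) - (lam M)%:MP * (\sum_(n < M) a n + a M).
    rewrite D_add D_sum Ha mulrDr mulr_sumr.
    rewrite /b opprD addrACA subrr addr0 -sumrB.
    by apply: eq_bigr => i _; rewrite Ha mpolyCB mulrBl.
  by apply: inJ_sub; [apply: DJ | apply: inJ_mul].
have IHb := IH b lam _ _ Hb.
have Hlt : forall n, (n < M)%N -> inJ (a n).
  move=> k Hk.
  have Hne : lam k - lam M != 0.
    rewrite subr_eq0; apply/eqP => E.
    by move: (Hinj _ _ (ltnW Hk) (ltnSn M) E) => E'; rewrite E' ltnn in Hk.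
  have -> : a k = ((lam k - lam M)^-1)%:MP * b k.
    by rewrite /b mulrA -mpolyCM mulVf // mul1r.
  apply: inJ_mul; apply: IHb => //.
  - move=> i; rewrite /b D_scale Ha mulrCA.
    done.
  - by move=> i i' Hi Hi'; apply: Hinj; apply: ltnW.
case: (ltngtP n M) => [Hk|Hk|->]; first exact: Hlt.
- by rewrite ltnS leqNgt Hk in Hn.
- have -> : a M = (\sum_(n < M) a n + a M) - \sum_(n < M) a n by rewrite addrC addKr.
  by apply: inJ_sub => //; apply: inJ_sum.
Qed.


Lemma wdeg_add (m1 m2 : 'X_{1..3}) : wdeg w (m1 + m2)%MM = (wdeg w m1 + wdeg w m2)%N.
Proof. rewrite /wdeg !sum3n !mnmDE !mulnDr; lia. Qed.

Lemma wdeg_Un (k : 'I_3) n : wdeg w (U_(k) *+ n)%MM = (w k * n)%N.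
Proof.
rewrite /wdeg sum3n !mulmnE !mnm1E.
by case: (ord3_cases k) => [->|[->|->]] /=; rewrite !mul0n !muln0 ?addn0 ?add0n !mul1n.
Qed.

Lemma wdeg0 (m : 'X_{1..3}) : (forall i, 0 < w i)%N -> wdeg w m = 0%N -> m = 0%MM.
Proof.
move=> wpos; rewrite /wdeg sum3n => H; apply/mnmP => i; rewrite mnm0E.
have h0 := wpos i0; have h1 := wpos i1; have h2 := wpos i2.
have e0 : (w i0 * m i0 = 0)%N by lia.
have e1 : (w i1 * m i1 = 0)%N by lia.
have e2 : (w i2 * m i2 = 0)%N by lia.
by case: (ord3_cases i) => [->|[->|->]]; nia.
Qed.

Hypothesis charF0 : forall n : nat, (n%:R == 0 :> F) = (n == 0%N).

Lemma natr_inj (a b : nat) : (a%:R : F) = b%:R -> a = b.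
Proof.
wlog Hab : a b / (a <= b)%N.
  move=> Hw E; case: (leqP a b) => H; first exact: Hw.
  by apply/esym; apply: Hw; [apply: ltnW | apply/esym].
move=> E; have : ((b - a)%:R == 0 :> F) by rewrite natrB // E subrr.
by rewrite charF0 subn_eq0 => H; apply/eqP; rewrite eqn_leq Hab H.
Qed.

Hypothesis findim : Asing_findim phi.

Lemma mono_in_J (k : 'I_3) : (0 < w k)%N -> exists n, inJ ('X_k ^+ n).
Proof.
move=> wk; case: findim => s Hs; set S := size s.
have C : forall n : 'I_S.+1, {c : nat -> F |
   inJ ('X_k ^+ n - \sum_(j < S) c j *: s`_j)}.
  move=> n; apply: constructive_indefinite_description; exact: Hs.
pose A : 'M[F]_(S.+1, S) := \matrix_(n, j) sval (C n) j.
have rk : \rank (kermx A) != 0%N.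
  by rewrite mxrank_ker subn_eq0 -ltnNge ltnS rank_leq_col.
have [i [j Hij]] : exists i j, kermx A i j != 0.
  apply: NNPP => Hn; move: rk.
  have -> : kermx A = 0.
    apply/matrixP => i j; apply: NNPP => H; apply: Hn; exists i, j.
    by apply/negP => /eqP H'; apply: H; rewrite H' mxE.
  by rewrite mxrank0.
set v := row i (kermx A).
have vA : v *m A = 0 by rewrite /v -row_mul mulmx_ker row0.
pose a := fun n : nat => (v 0 (inord n))%:MP * 'X_k ^+ n.
have Hsum : inJ (\sum_(n < S.+1) a n).
  have -> : \sum_(n < S.+1) a n =
     \sum_(n < S.+1) (v 0 n)%:MP * ('X_k ^+ n - \sum_(j < S) sval (C n) j *: s`_j).
    have E0 : \sum_(n < S.+1) (v 0 n)%:MP * (\sum_(j < S) sval (C n) j *: s`_j) = 0.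
      under eq_bigr do rewrite mul_mpolyC scaler_sumr.
      rewrite exchange_big /=; apply: big1 => j' _.
      under eq_bigr do rewrite scalerA.
      rewrite -scaler_suml.
      have -> : \sum_(n < S.+1) v 0 n * sval (C n) j' = (v *m A) 0 j'.
        rewrite !mxE; apply: eq_bigr => n _; by rewrite !mxE.
      by rewrite vA mxE scale0r.
    under [RHS]eq_bigr do rewrite mulrBr.
    rewrite sumrB E0 subr0; apply: eq_bigr => n _; by rewrite /a inord_val.
  apply: (big_ind (fun p => inJ p)); [exact: inJ0 | exact: inJ_add |].
  move=> n _; apply: inJ_mul; exact: (svalP (C n)).
have Heig : forall n, Dop (a n) = ((w k * n)%:R)%:MP * a n.
  move=> n; rewrite /a D_scale mulrCA; congr (_ * _).
  apply: D_hom => m; rewrite mpolyXn msuppX mem_seq1 => /eqP ->.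
  by rewrite wdeg_Un.
have Hinj : forall n n', (n < S.+1)%N -> (n' < S.+1)%N ->
    ((w k * n)%:R : F) = (w k * n')%:R -> n = n'.
  by move=> n n' _ _ /natr_inj /eqP; rewrite eqn_pmul2l // => /eqP.
have HJ := sep Heig Hinj Hsum (ltn_ord j).
exists j.
have Hv : v 0 (inord j) != 0 by rewrite inord_val /v mxE.
have -> : 'X_k ^+ j = ((v 0 (inord j))^-1)%:MP * a j.
  by rewrite /a mulrA -mpolyCM mulVf // mul1r.
exact: inJ_mul.
Qed.


Lemma mk_mpoly (E : 'X_{1..3} -> F) k :
  (forall m, (k <= mdeg m)%N -> E m = 0) -> exists q : poly3 F, forall m, q@_m = E m.
Proof.
move=> HE; exists (\sum_(m : 'X_{1..3 < k}) E m *: 'X_[m]) => m.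
case: (ltnP (mdeg m) k) => H; first exact: mcoeff_mpoly.
rewrite raddf_sum big1 ?HE //= => m' _.
rewrite mcoeffZ mcoeffX; case: eqP => [E'|]; last by rewrite mulr0.
by move: (bmdeg m'); rewrite E' ltnNge H.
Qed.

Lemma X_neq0 (i : 'I_3) n : ('X_i ^+ n : poly3 F) != 0.
Proof.
apply/eqP => H; have := @mcoeffXn 3 F U_(i) n (U_(i) *+ n)%MM.
by rewrite H mcoeff0 eqxx => /eqP; rewrite eq_sym oner_eq0.
Qed.

Lemma cancelX (g h0 h1 : poly3 F) N M : phi != 0 ->
  g * 'X_i0 ^+ N = phi * h0 -> g * 'X_i1 ^+ M = phi * h1 -> in_phiA phi g.
Proof.
move=> nz E0 E1.
have E : h0 * 'X_i1 ^+ M = h1 * 'X_i0 ^+ N.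
  apply: (mulfI nz); rewrite !mulrA -E0 -E1 -!mulrA; congr (_ * _); exact: mulrC.
move: E0 E; rewrite !mpolyXn => E0 E.
have Z : forall m : 'X_{1..3}, (m i0 < N)%N -> h0@_m = 0.
  move=> m Hm; rewrite -(mcoeffMX h0 (U_(i1) *+ M)%MM m) E coefMX0 //.
  apply/negP => /mnm_lepP /(_ i0); rewrite mnmDE !mulmnE !mnm1E /=.
  by rewrite mul1n mul0n add0n leqNgt Hm.
have [r Hr] : exists r : poly3 F, forall m, r@_m = h0@_(U_(i0) *+ N + m)%MM.
  apply: (mk_mpoly (k := msize h0)) => m Hm; apply: memN_msupp_eq0.
  apply/negP => /msize_mdeg_lt; rewrite mdegD ltnNge.
  by rewrite (leq_trans Hm (leq_addl _ _)).
have Eh : h0 = r * 'X_[U_(i0) *+ N].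
  apply/mpolyP => m.
  have [Hle|Hle] := boolP (U_(i0) *+ N <= m)%MM.
    have Em : m = (U_(i0) *+ N + (m - U_(i0) *+ N))%MM by rewrite addmC submK.
    by rewrite {2}Em mcoeffMX Hr -Em.
  rewrite coefMX0 // Z //; rewrite ltnNge; apply: contra Hle => Hm.
  apply/mnm_lepP => i; rewrite mulmnE mnm1E.
  by case: eqP => [<-|_]; rewrite ?mul1n ?mul0n.
exists r; apply: (mulIf (X_neq0 i0 N)); rewrite mpolyXn E0 Eh mulrA //.
Qed.


Lemma colon (g j : poly3 F) : (forall i, in_phiA phi (g * phi^`M(i))) ->
  inJ j -> in_phiA phi (g * j).
Proof.
move=> H [c ->]; rewrite !sum3.
have [a0 E0] := H i0; have [a1 E1] := H i1; have [a2 E2] := H i2.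
exists (c i0 * a0 + c i1 * a1 + c i2 * a2).
have -> : g * (c i0 * phi^`M(i0) + c i1 * phi^`M(i1) + c i2 * phi^`M(i2)) =
  c i0 * (g * phi^`M(i0)) + c i1 * (g * phi^`M(i1)) + c i2 * (g * phi^`M(i2)) by ring.
rewrite E0 E1 E2; ring.
Qed.

Lemma wdeg_U (i : 'I_3) : wdeg w U_(i) = w i.
Proof.
have := wdeg_Un i 1; rewrite muln1 => <-; congr wdeg; by apply/mnmP => j; rewrite mulmnE muln1.
Qed.

Variable d : nat.
Hypothesis hom : forall m, m \in msupp phi -> wdeg w m = d.

Lemma D_phi : Dop phi = (d%:R)%:MP * phi.
Proof. exact: D_hom. Qed.

Lemma D_dphi (i : 'I_3) : Dop phi^`M(i) = ((d - w i)%:R)%:MP * phi^`M(i).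
Proof.
apply: D_hom => m; rewrite mcoeff_msupp mcoeff_deriv => Hm.
have Hs : (m + U_(i))%MM \in msupp phi.
  by rewrite mcoeff_msupp; apply: contra Hm => /eqP ->; rewrite mul0rn.
by rewrite -(hom Hs) wdeg_add wdeg_U addnK.
Qed.

Lemma DJ_hold j : inJ j -> inJ (Dop j).
Proof.
move=> [c ->]; exists (fun i => Dop (c i) + c i * ((d - w i)%:R)%:MP).
rewrite !sum3 !D_add !D_mul !D_dphi; ring.
Qed.


Lemma cross0 (u v : 'I_3 -> poly3 F) : cross u v i0 = u i1 * v i2 - u i2 * v i1.
Proof. by []. Qed.
Lemma cross1 (u v : 'I_3 -> poly3 F) : cross u v i1 = u i2 * v i0 - u i0 * v i2.
Proof. by []. Qed.
Lemma cross2 (u v : 'I_3 -> poly3 F) : cross u v i2 = u i0 * v i1 - u i1 * v i0.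
Proof. by []. Qed.

Lemma cross_to_colon f :
  (forall i : 'I_3, in_phiA phi (cross (grad f) (grad phi) i)) ->
  forall i, in_phiA phi (Dop f * phi^`M(i)).
Proof.
move=> H.
have [V0 E0] := H i0; have [V1 E1] := H i1; have [V2 E2] := H i2.
move: E0 E1 E2; rewrite cross0 cross1 cross2 /grad => E0 E1 E2.
have Hdp : Dop phi = (d%:R)%:MP * phi by exact: D_phi.
move: Hdp; rewrite /Dop sum3 => Hdp.
move=> i; rewrite /Dop sum3.
set e0 := ((w i0)%:R)%:MP; set e1 := ((w i1)%:R)%:MP; set e2 := ((w i2)%:R)%:MP.
set dd := (d%:R)%:MP : poly3 F.
case: (ord3_cases i) => [->|[->|->]].
- exists (f^`M(i0) * dd - e1 * 'X_i1 * V2 + e2 * 'X_i2 * V1).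
  have -> : (e0 * ('X_i0 * f^`M(i0)) + e1 * ('X_i1 * f^`M(i1)) + e2 * ('X_i2 * f^`M(i2))) * phi^`M(i0)
    = f^`M(i0) * (e0 * ('X_i0 * phi^`M(i0)) + e1 * ('X_i1 * phi^`M(i1)) + e2 * ('X_i2 * phi^`M(i2)))
      - e1 * 'X_i1 * (f^`M(i0) * phi^`M(i1) - f^`M(i1) * phi^`M(i0))
      + e2 * 'X_i2 * (f^`M(i2) * phi^`M(i0) - f^`M(i0) * phi^`M(i2)) by ring.
  rewrite Hdp E1 E2; ring.
- exists (f^`M(i1) * dd - e2 * 'X_i2 * V0 + e0 * 'X_i0 * V2).
  have -> : (e0 * ('X_i0 * f^`M(i0)) + e1 * ('X_i1 * f^`M(i1)) + e2 * ('X_i2 * f^`M(i2))) * phi^`M(i1)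
    = f^`M(i1) * (e0 * ('X_i0 * phi^`M(i0)) + e1 * ('X_i1 * phi^`M(i1)) + e2 * ('X_i2 * phi^`M(i2)))
      - e2 * 'X_i2 * (f^`M(i1) * phi^`M(i2) - f^`M(i2) * phi^`M(i1))
      + e0 * 'X_i0 * (f^`M(i0) * phi^`M(i1) - f^`M(i1) * phi^`M(i0)) by ring.
  rewrite Hdp E0 E2; ring.
- exists (f^`M(i2) * dd - e0 * 'X_i0 * V1 + e1 * 'X_i1 * V0).
  have -> : (e0 * ('X_i0 * f^`M(i0)) + e1 * ('X_i1 * f^`M(i1)) + e2 * ('X_i2 * f^`M(i2))) * phi^`M(i2)
    = f^`M(i2) * (e0 * ('X_i0 * phi^`M(i0)) + e1 * ('X_i1 * phi^`M(i1)) + e2 * ('X_i2 * phi^`M(i2)))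
      - e0 * 'X_i0 * (f^`M(i2) * phi^`M(i0) - f^`M(i0) * phi^`M(i2))
      + e1 * 'X_i1 * (f^`M(i1) * phi^`M(i2) - f^`M(i2) * phi^`M(i1)) by ring.
  rewrite Hdp E0 E1; ring.
Qed.


Hypothesis wpos : forall i, (0 < w i)%N.

Lemma integrate f k : Dop f = phi * k -> phi != 0 -> const_mod_phi phi f.
Proof.
move=> Hf nz.
case: (ltnP 0 d) => [dpos|d0']; last first.
  have d0 : d = 0%N by apply/eqP; rewrite -leqn0.
  have Ephi : phi = (phi@_0%MM)%:MP.
    apply/mpolyP => m; rewrite mcoeffC.
    case: (boolP (m \in msupp phi)) => Hm.
      by move: (hom Hm); rewrite d0 => /(wdeg0 wpos) ->; rewrite eqxx mulr1.
    case: eqP => [Em|_]; last by rewrite (memN_msupp_eq0 Hm) mulr0.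
    subst m; by rewrite (memN_msupp_eq0 Hm) mul0r.
  have c0 : phi@_0%MM != 0 by apply: contra nz; rewrite {2}Ephi => /eqP ->.
  exists 0, ((phi@_0%MM)^-1%:MP * f).
  by rewrite {1}Ephi mulrA -mpolyCM divff // mul1r add0r.
have nzn : forall m, ((wdeg w m + d)%:R : F) != 0.
  by move=> m; rewrite charF0 addn_eq0 negb_and; apply/orP; right; rewrite -lt0n.
have [K HK] : exists K : poly3 F, forall m, K@_m = k@_m / (wdeg w m + d)%:R.
  apply: (mk_mpoly (k := msize k)) => m Hm.
  by rewrite memN_msupp_eq0 ?mul0r //; apply/negP => /msize_mdeg_lt; rewrite ltnNge Hm.
have EK : (d%:R)%:MP * K + Dop K = k.
  apply/mpolyP => m; rewrite mcoeffD mcoeffCM D_coef HK -mulrDl -natrD addnC.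
  by rewrite mulrC -mulrA mulVf // mulr1.
set p := f - phi * K.
have Dp : Dop p = 0.
  rewrite /p D_sub D_mul D_phi Hf -EK; ring.
exists (p@_0%MM), K.
have -> : (p@_0%MM)%:MP = p.
  apply/mpolyP => m; rewrite mcoeffC.
  case: eqP => [->|Hm]; first by rewrite mulr1.
  have : (Dop p)@_m = 0 by rewrite Dp mcoeff0.
  rewrite D_coef => /eqP; rewrite mulf_eq0 charF0 => /orP [/eqP Hw|/eqP ->].
    by case: Hm; apply: wdeg0.
  by rewrite mulr0.
by rewrite /p subrK.
Qed.

End S.

Section T.
Variable F : fieldType.
Implicit Types p q : poly3 F.

Lemma dX (i j : 'I_3) : ('X_j : poly3 F)^`M(i) = (j == i)%:R.
Proof.
rewrite mderivX mnm1E; case: eqP => [->|_]; last by rewrite scale0r.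
have -> : (U_(i) - U_(i) = 0)%MM by apply/mnmP => k; rewrite mnmBE subnn mnm0E.
by rewrite mpolyX0 scale1r.
Qed.

Lemma bracketX (phi f : poly3 F) (i : 'I_3) :
  pbracket phi f 'X_i = - cross (grad f) (grad phi) i.
Proof.
rewrite /pbracket sum3 cross0 cross1 cross2 /grad !dX.
case: (ord3_cases i) => [->|[->|->]]; rewrite ?cross0 ?cross1 ?cross2 /=; ring.
Qed.

Lemma const_casimir (phi f : poly3 F) : const_mod_phi phi f -> casimir_rep phi f.
Proof.
move=> [c [h ->]] g; exists (pbracket phi h g).
rewrite /pbracket /grad !sum3 !cross0 !cross1 !cross2 !mderivD !mderivC !mderivM.
ring.
Qed.

End T.

Theorem mainTheorem9 (F : fieldType) (charF0 : [pchar F] =i pred0)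
  (w : 'I_3 -> nat) (wpos : forall i, (0 < w i)%N)
  (wcop : gcdn (w i0) (gcdn (w i1) (w i2)) = 1%N)
  (phi : poly3 F) (hphi : whis w phi) :
  (forall f : poly3 F, casimir_rep phi f <-> const_mod_phi phi f) /\
  (forall f : poly3 F,
     (forall i : 'I_3, in_phiA phi (cross (grad f) (grad phi) i)) ->
     const_mod_phi phi f).
Proof.
case: hphi => [[d [nz hom]] [_ fd]].
have ch : forall n : nat, (n%:R == 0 :> F) = (n == 0%N) by apply/GRing.pcharf0P.
have P2 : forall f : poly3 F,
     (forall i : 'I_3, in_phiA phi (cross (grad f) (grad phi) i)) ->
     const_mod_phi phi f.
  move=> f H.
  have Hc := cross_to_colon hom H.
  have DJ := DJ_hold hom.
  have [N HN] := mono_in_J DJ ch fd (wpos i0).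
  have [M HM] := mono_in_J DJ ch fd (wpos i1).
  have [h0 E0] := colon Hc HN.
  have [h1 E1] := colon Hc HM.
  have [k Hk] := cancelX nz E0 E1.
  exact: (integrate ch hom wpos Hk nz).
split => // f; split; last exact: const_casimir.
move=> Hc; apply: P2 => i.
have [h Eh] := Hc 'X_i.
exists (- h); rewrite bracketX in Eh.
by rewrite mulrN -Eh opprK.
Qed.
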